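(* Let $n$ be even, $1\le q_n\le n/2$, $I_n=\{(i_1,\dots,i_{q_n}):1\le i_1<\dots<i_{q_n}\le n\}$, and for $R=(i_1,\dots,i_{q_n})\in I_n$ let $\Psi_R=\psi_{i_1}\cdots\psi_{i_{q_n}}\,i^{\lfloor q_n/2\rfloor}$. Let $\pi\in\mathcal{P}_2(k)$ and set $$S(\pi,n):=\frac{1}{|I_n|^{k/2}}\sum_{\substack{\alpha:[k]\to I_n\\ \ker\alpha\ge\pi}}\operatorname{tr}(\Psi_{\alpha(1)}\cdots\Psi_{\alpha(k)}).$$ Let $V$ be a block of $\pi$ and $R\in I_n$. Then $$\frac{1}{|I_n|^{(k-2)/2}}\sum_{\substack{\alpha:[k]\to I_n\\ \ker\alpha\ge\pi\\ \alpha(V)=R}}\operatorname{tr}(\Psi_{\alpha(1)}\cdots\Psi_{\alpha(k)})=S(\pi,n);$$ in particular this restricted sum does not depend on the choice of the block $V$ nor of the value $R$.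
   Context: $\psi_1,\dots,\psi_n$ are Majorana fermions: $2^{n/2}\times2^{n/2}$ matrices with $\psi_i\psi_j+\psi_j\psi_i=2\delta_{ij}I$, realized as $\psi_j=\sigma_3^{\otimes(j-1)}\otimes\sigma_1\otimes 1^{\otimes(n/2-j)}$, $\psi_{n/2+j}=\sigma_3^{\otimes(j-1)}\otimes\sigma_2\otimes 1^{\otimes(n/2-j)}$ with Pauli matrices. $\operatorname{tr}$ is the normalized trace. $\mathcal{P}_2(k)$ is the set of pair partitions of $[k]=\{1,\dots,k\}$; $\ker\alpha$ is the partition of $[k]$ into the nonempty level sets of $\alpha$; $\pi\le\sigma$ means each block of $\pi$ lies in a block of $\sigma$; for a block $V$ of $\pi\le\ker\alpha$, $\alpha(V)$ is the common value of $\alpha$ on $V$. *)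

(* Defs.v *)
From HB Require Import structures.
From mathcomp Require Import all_boot all_order all_algebra all_field.
From mathcomp Require Import mxtens.
Set Implicit Arguments. Unset Strict Implicit. Unset Printing Implicit Defensive.
Import Order.TTheory GRing.Theory Num.Theory.
Local Open Scope ring_scope.

Definition sigma1 : 'M[algC]_2 := \matrix_(i < 2, j < 2) (if i == j then 0 else 1).
Definition sigma2 : 'M[algC]_2 :=
  \matrix_(i < 2, j < 2) (if i == j then 0 else if i == 0 then - 'i else 'i).
Definition sigma3 : 'M[algC]_2 :=
  \matrix_(i < 2, j < 2) (if i == j then (if i == 0 then 1 else -1) else 0).

Lemma jw_dim (m j : nat) : (j < m)%N -> (2 ^ j * 2 * 2 ^ (m - j.+1) = 2 ^ m)%N.
Proof.
move=> h; rewrite -expnSr -expnD; congr (_ ^ _)%N.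
by rewrite addSn -addnS subnSK ?subnKC // ltnW.
Qed.

(* Jordan-Wigner string  sigma3^{(x) j} (x) s (x) 1^{(x) (m-j-1)}  (0-based j),
   a 2^m x 2^m matrix (0 if j >= m, never used). *)
Definition jw (m j : nat) (s : 'M[algC]_2) : 'M[algC]_(2 ^ m) :=
  match ltnP j m with
  | LtnNotGeq h => castmx (jw_dim h, jw_dim h)
                     (sigma3 ^t j *t s *t (1%:M : 'M[algC]_2) ^t (m - j.+1))
  | GeqNotLtn _ => 0
  end.

(* Majorana fermions psi_1..psi_n (here 0-based: psi 0 .. psi (n-1)), n even,
   psi_{j} = jw with sigma1 at site j, psi_{n/2+j} = jw with sigma2 at site j. *)
Definition psi (n : nat) (i : 'I_n) : 'M[algC]_(2 ^ n./2) :=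
  if (i < n./2)%N then jw n./2 i sigma1 else jw n./2 (i - n./2) sigma2.

Definition ntr (m : nat) (A : 'M[algC]_(2 ^ m)) : algC := \tr A / (2 ^ m)%:R.

(* I_n: increasing q-tuples of [n], represented as q-element subsets of 'I_n *)
Definition Iset (n q : nat) : {set {set 'I_n}} := [set R : {set 'I_n} | #|R| == q].

(* Psi_R = psi_{i_1} ... psi_{i_q} * i^{floor(q/2)}, i_1 < ... < i_q the
   elements of R in increasing order (enum of a set of ordinals is increasing) *)
Definition Psi (n q : nat) (R : {set 'I_n}) : 'M[algC]_(2 ^ n./2) :=
  (\prod_(i <- enum R) psi i) * ('i ^+ q./2)%:M.

Definition pair_partition (k : nat) (P : {set {set 'I_k}}) : bool :=
  partition P [set: 'I_k] && [forall B in P, #|B| == 2%N].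

Definition ker_ge (k : nat) (T : eqType) (a : 'I_k -> T) (P : {set {set 'I_k}}) : bool :=
  [forall B in P, [forall x in B, [forall y in B, a x == a y]]].

Definition trPsi (n q k : nat) (a : {ffun 'I_k -> {set 'I_n}}) : algC :=
  ntr (\prod_(j < k) Psi q (a j)).

Definition S (n q k : nat) (P : {set {set 'I_k}}) : algC :=
  ((#|Iset n q|%:R : algC) ^+ k./2)^-1 *
  \sum_(a : {ffun 'I_k -> {set 'I_n}} |
          [forall j, a j \in Iset n q] && ker_ge a P) trPsi q a.

(* Main.v *)
Require Import Defs.
From HB Require Import structures.
From mathcomp Require Import all_boot all_order all_algebra all_field.
From mathcomp Require Import mxtens.
From mathcomp Require Import all_fingroup.
From mathcomp Require Import zify ring lra.
Import Order.TTheory GRing.Theory Num.Theory.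
Local Open Scope ring_scope.
Set Implicit Arguments. Unset Strict Implicit. Unset Printing Implicit Defensive.

Definition bit (r x : nat) : bool := odd (x %/ 2 ^ r).
Definition hi (r x : nat) : nat := x %/ 2 ^ r.+1.
Definition lo (r x : nat) : nat := x %% 2 ^ r.

Lemma decomp r x : x = (hi r x * 2 ^ r.+1 + bit r x * 2 ^ r + lo r x)%N.
Proof.
rewrite /hi /bit /lo {1}(divn_eq x (2 ^ r)); congr (_ + _)%N.
have -> : (x %/ 2 ^ r.+1 * 2 ^ r.+1 = (x %/ 2 ^ r %/ 2 * 2) * 2 ^ r)%N.
  by rewrite expnSr divnMA [(2 ^ r * 2)%N]mulnC mulnA.
by rewrite -mulnDl -modn2 -divn_eq.
Qed.

Lemma split_div r h l (b : bool) : (l < 2 ^ r)%N -> ((h * 2 ^ r.+1 + b * 2 ^ r + l)%N %/ 2 ^ r = h * 2 + b)%N.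
Proof.
move=> hl; have -> : (h * 2 ^ r.+1 + b * 2 ^ r + l)%N = ((h * 2 + b) * 2 ^ r + l)%N by rewrite expnS; ring.
by rewrite divnMDl ?expn_gt0 // divn_small // addn0.
Qed.
Lemma split_lo r h l (b : bool) : (l < 2 ^ r)%N -> lo r (h * 2 ^ r.+1 + b * 2 ^ r + l)%N = l.
Proof.
move=> hl; have -> : (h * 2 ^ r.+1 + b * 2 ^ r + l)%N = ((h * 2 + b) * 2 ^ r + l)%N by rewrite expnS; ring.
by rewrite /lo modnMDl modn_small.
Qed.
Lemma split_bit r h l (b : bool) : (l < 2 ^ r)%N -> bit r (h * 2 ^ r.+1 + b * 2 ^ r + l)%N = b.
Proof. by move=> hl; rewrite /bit split_div // oddD oddM andbF; case: b. Qed.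
Lemma split_hi r h l (b : bool) : (l < 2 ^ r)%N -> hi r (h * 2 ^ r.+1 + b * 2 ^ r + l)%N = h.
Proof.
move=> hl; have e : forall z, (z %/ 2 ^ r.+1 = z %/ 2 ^ r %/ 2)%N by move=> z; rewrite expnSr divnMA.
rewrite /hi e split_div // divnMDl // divn_small ?addn0 //; by case: b.
Qed.

Lemma lo_lt r x : (lo r x < 2 ^ r)%N.
Proof. by rewrite /lo ltn_mod expn_gt0. Qed.

Lemma bit_hi r i x : (r < i)%N -> bit i x = bit (i - r.+1) (hi r x).
Proof.
move=> ri; rewrite /bit /hi -divnMA -expnD subnKC //.
Qed.

Lemma bit_lo r i x : (i < r)%N -> bit i x = bit i (lo r x).
Proof.
move=> ir; rewrite /bit /lo {1}(divn_eq x (2 ^ r)).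
have -> : (2 ^ r = 2 ^ (r - i) * 2 ^ i)%N by rewrite -expnD subnK // ltnW.
rewrite mulnA divnMDl ?expn_gt0 // oddD oddM.
have -> : odd (2 ^ (r - i)) = false by rewrite oddX /= subn_eq0 leqNgt ir.
by rewrite andbF.
Qed.

Definition flip (r x : nat) : nat := (hi r x * 2 ^ r.+1 + (~~ bit r x) * 2 ^ r + lo r x)%N.

Lemma hi_flip r x : hi r (flip r x) = hi r x.
Proof. by rewrite /flip split_hi // lo_lt. Qed.
Lemma lo_flip r x : lo r (flip r x) = lo r x.
Proof. by rewrite /flip split_lo // lo_lt. Qed.
Lemma bit_flip r x : bit r (flip r x) = ~~ bit r x.
Proof. by rewrite /flip split_bit // lo_lt. Qed.
Lemma bit_flip_ne r i x : i != r -> bit i (flip r x) = bit i x.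
Proof.
rewrite neq_ltn => /orP [] h.
  by rewrite (bit_lo x h) (bit_lo (flip r x) h) lo_flip.
by rewrite (bit_hi x h) (bit_hi (flip r x) h) hi_flip.
Qed.
Lemma flipK r x : flip r (flip r x) = x.
Proof. by rewrite {1}/flip hi_flip lo_flip bit_flip negbK -decomp. Qed.

Lemma eq_decomp r x y : (x == y) = [&& hi r x == hi r y, bit r x == bit r y & lo r x == lo r y].
Proof.
apply/eqP/and3P => [-> //|[/eqP h /eqP b /eqP l]].
by rewrite (decomp r x) (decomp r y) h b l.
Qed.

Lemma eq_flip r x y : (y == flip r x) = [&& hi r x == hi r y, bit r x != bit r y & lo r x == lo r y].
Proof.
rewrite (eq_decomp r) hi_flip lo_flip bit_flip.
by rewrite [hi _ _ == _]eq_sym [lo _ _ == _]eq_sym; case: (bit r x); case: (bit r y).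
Qed.

Lemma flip_lt m r x : (r < m)%N -> (x < 2 ^ m)%N -> (flip r x < 2 ^ m)%N.
Proof.
move=> rm xm.
have hm : (hi r x < 2 ^ (m - r.+1))%N.
  by rewrite /hi ltn_divLR ?expn_gt0 // -expnD subnK.
have e : (2 ^ m = 2 ^ (m - r.+1) * 2 * 2 ^ r)%N by rewrite -mulnA -expnS -expnD subnK.
rewrite e /flip expnS.
have := lo_lt r x; move: hm; set H := hi r x; set L := lo r x; set P := (2 ^ r)%N; set Q := (2 ^ (m - r.+1))%N.
case: (~~ bit r x) => /=; nia.
Qed.


Lemma eq_divmod (p x y : nat) : (x == y) = (x %/ p == y %/ p)%N && (x %% p == y %% p)%N.
Proof.
apply/eqP/andP => [-> //|[/eqP h1 /eqP h2]].
by rewrite (divn_eq x p) (divn_eq y p) h1 h2.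
Qed.

Lemma ntens_diag (A : 'M[algC]_2) (e : algC) :
  (forall a b : 'I_2, A a b = (a == b)%:R * e ^+ a) ->
  forall j (x y : 'I_(2 ^ j)),
  (A ^t j) x y = ((x : nat) == y)%:R * \prod_(i < j) e ^+ bit i x.
Proof.
move=> hA; elim=> [|j IH] x y.
  rewrite big_ord0 mulr1 ntensmx0.
  case: x => [[|//] ?]; case: y => [[|//] ?].
  by rewrite !mxE.
case: j IH x y => [|k] IH x y.
  rewrite ntensmx1 hA big_ord1 /bit expn0 divn1.
  have : (x < 2)%N by [].
  by case: x => [[|[|//]] ?] /=.
rewrite ntensmxSS !mxE /= hA IH /= [in RHS]big_ord_recr /=.
set p := (2 ^ k.+1)%N.
have xlt : (x %/ p < 2)%N by rewrite ltn_divLR ?expn_gt0 // -expnSr.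
have -> : (Ordinal (mxtens_index_proof1 x) == Ordinal (mxtens_index_proof1 y)) = (x %/ p == y %/ p)%N by [].
have hxb : (x %/ p = bit k.+1 x)%N.
  by rewrite /bit; move: xlt; case: (x %/ 2 ^ k.+1)%N => [|[|]].
rewrite (eq_divmod p x y) !hxb.
under eq_bigr => i _ do rewrite -(@bit_lo k.+1 i x (ltn_ord i)).
case: (x == y %[mod p]); rewrite ?andbT ?andbF /= ?mul0r ?mulr0 ?mul1r //; ring.
Qed.

Definition sgn m r x : algC := \prod_(r.+1 <= i < m) (-1) ^+ bit i x.
Definition mono m (f : nat -> nat) (c : nat -> algC) : 'M[algC]_(2 ^ m) :=
  \matrix_(i, j) (((j : nat) == f i)%:R * c i).

Lemma sigma3E (a b : 'I_2) : sigma3 a b = (a == b)%:R * (-1) ^+ a.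
Proof. rewrite !mxE; case: a => [[|[|//]] ?]; case: b => [[|[|//]] ?]; by rewrite /= ?mul0r ?mul1r ?expr0 ?expr1. Qed.
Lemma id2E (a b : 'I_2) : (1%:M : 'M[algC]_2) a b = (a == b)%:R * 1 ^+ a.
Proof. by rewrite !mxE expr1n mulr1. Qed.

Lemma sgn_hi m r x : (r < m)%N ->
  sgn m r x = \prod_(i < m - r.+1) (-1) ^+ bit i (hi r x).
Proof.
move=> rm; rewrite /sgn -{1}(add0n r.+1) big_addn big_mkord; apply: eq_bigr => i _.
by rewrite (@bit_hi r) ?addnK //; lia.
Qed.

Lemma jw_mono m j (s : 'M[algC]_2) (g : bool -> algC) : (j < m)%N ->
  (forall a b : 'I_2, s a b = if a == b then 0 else g (val a == 1%N)) ->
  jw m j s = mono m (flip (m - j.+1)) (fun x => sgn m (m - j.+1) x * g (bit (m - j.+1) x)).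
Proof.
move=> jm hs; rewrite /jw; case: ltnP => h; last by move: jm; rewrite ltnNge h.
apply/matrixP => X Y; rewrite castmxE !mxE /=.
rewrite (ntens_diag sigma3E) (ntens_diag id2E) hs -!val_eqE /=.
have e0 : forall x, \prod_(i < m - j.+1) (1:algC) ^+ bit i x = 1.
  by move=> x; apply: big1 => i _; rewrite expr1n.
rewrite e0 mulr1.
set r := (m - j.+1)%N.
have e1 : (X %/ 2 ^ r %/ 2 = hi r X)%N by rewrite /hi expnSr divnMA.
have e2 : (Y %/ 2 ^ r %/ 2 = hi r Y)%N by rewrite /hi expnSr divnMA.
have e3 : ((X %/ 2 ^ r) %% 2 = bit r X)%N by rewrite modn2.
have e4 : ((Y %/ 2 ^ r) %% 2 = bit r Y)%N by rewrite modn2.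
rewrite e1 e2 e3 e4 -/(lo r X) -/(lo r Y) eq_flip (sgn_hi X); last by rewrite /r; lia.
have -> : (m - r.+1 = j)%N by rewrite /r; lia.
have -> : (nat_of_bool (bit r X) == 1%N) = bit r X by case: (bit r X).
case: (hi r X == hi r Y); case: (lo r X == lo r Y); case: (bit r X); case: (bit r Y);
  rewrite /= ?mul0r ?mulr0 ?mul1r ?mulr1 //.
Qed.


Lemma bits_inj x y : (forall i, bit i x = bit i y) -> x = y.
Proof.
move: {2}(x + y)%N (leqnn (x + y)%N) => N; elim: N x y => [|N IH] x y hN hb.
  by have [-> ->] : x = 0%N /\ y = 0%N by lia.
rewrite (decomp 0 x) (decomp 0 y) /lo !modn1 !expn0 (hb 0%N); congr (_ * _ + _ + _)%N.
have e : forall z, hi 0 z = (z %/ 2)%N by move=> z; rewrite /hi expn1.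
apply: IH => [|i]; first by rewrite !e; case: x hN {hb} => [|x]; case: y => [|y]; rewrite ?divn0; lia.
have := @bit_hi 0 i.+1 x isT; have := @bit_hi 0 i.+1 y isT; rewrite !subSS !subn0 => <- <-; exact: hb.
Qed.

Lemma flipC r r' x : flip r (flip r' x) = flip r' (flip r x).
Proof.
apply: bits_inj => i.
case: (eqVneq i r) => [<-|ir]; case: (eqVneq i r') => [<-|ir'].
- by [].
- by rewrite bit_flip (bit_flip_ne _ ir') (bit_flip_ne _ ir') bit_flip.
- by rewrite (bit_flip_ne _ ir) bit_flip bit_flip (bit_flip_ne _ ir).
- by rewrite !bit_flip_ne.
Qed.

Lemma mono_mul m f g c d : (forall x, (x < 2 ^ m)%N -> (f x < 2 ^ m)%N) ->
  mono m f c * mono m g d = mono m (fun x => g (f x)) (fun x => c x * d (f x)).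
Proof.
move=> hf; apply/matrixP => i j; rewrite -mulmxE !mxE.
rewrite (bigD1 (Ordinal (hf i (ltn_ord i)))) //= !mxE eqxx /= mul1r.
rewrite big1 ?addr0; last first.
  move=> k /negbTE hk; rewrite !mxE.
  suff -> : (k == f i :> nat) = false by rewrite mul0r mul0r.
  by apply: contraFF hk => /eqP e; apply/eqP/val_inj.
case: (j == g (f i) :> nat); rewrite ?mul0r ?mulr0 ?mul1r //.
Qed.

Lemma mono_ext m f g c d : (forall x, (x < 2 ^ m)%N -> f x = g x) ->
  (forall x, (x < 2 ^ m)%N -> c x = d x) -> mono m f c = mono m g d.
Proof. by move=> hf hc; apply/matrixP => i j; rewrite !mxE hf ?hc. Qed.

Lemma mono1 m : mono m id (fun _ => 1) = 1.
Proof. by apply/matrixP => i j; rewrite !mxE mulr1 val_eqE eq_sym. Qed.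

Lemma mono_opp m f c : - mono m f c = mono m f (fun x => - c x).
Proof. by apply/matrixP => i j; rewrite !mxE mulrN. Qed.

Lemma sgn_flip_le m r r' x : (r' <= r)%N -> sgn m r (flip r' x) = sgn m r x.
Proof.
move=> h; rewrite /sgn; apply: eq_big_nat => i /andP [hi _].
by rewrite bit_flip_ne //; apply: contraTneq hi => ->; rewrite -ltnNge ltnS.
Qed.

Lemma sgn_flip_lt m r r' x : (r' < r)%N -> (r < m)%N -> sgn m r' (flip r x) = - sgn m r' x.
Proof.
move=> h1 h2; rewrite /sgn !(@big_cat_nat _ _ _ r r'.+1 m) //; try lia.
rewrite !(@big_ltn _ _ _ r m) // bit_flip.
have e1 : \prod_(r'.+1 <= i < r) (-1) ^+ bit i (flip r x) = \prod_(r'.+1 <= i < r) (-1) ^+ bit i x :> algC.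
  by apply: eq_big_nat => i /andP [_ hi]; rewrite bit_flip_ne // ltn_eqF.
have e2 : \prod_(r.+1 <= i < m) (-1) ^+ bit i (flip r x) = \prod_(r.+1 <= i < m) (-1) ^+ bit i x :> algC.
  by apply: eq_big_nat => i /andP [hi _]; rewrite bit_flip_ne // gtn_eqF.
rewrite e1 e2; case: (bit r x) => /=; rewrite ?expr1 ?expr0; ring.
Qed.

Lemma sgn_sq m r x : sgn m r x * sgn m r x = 1.
Proof.
rewrite /sgn -big_split /=; apply: big1 => i _.
by case: (bit i x); rewrite ?expr1 ?expr0 ?mulrNN ?mulr1.
Qed.

Definition Jm m r (g : bool -> algC) := mono m (flip r) (fun x => sgn m r x * g (bit r x)).

Lemma Jm_mul_same m r g h : (r < m)%N ->
  Jm m r g * Jm m r h = mono m id (fun x => g (bit r x) * h (~~ bit r x)).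
Proof.
move=> rm; rewrite /Jm mono_mul; last by move=> x; exact: flip_lt.
apply: mono_ext => x _; first by rewrite flipK.
rewrite sgn_flip_le // bit_flip.
by rewrite mulrCA !mulrA sgn_sq mul1r.
Qed.

Lemma Jm_sq m r g : (r < m)%N -> (forall b, g b * g (~~ b) = 1) -> Jm m r g * Jm m r g = 1.
Proof.
by move=> rm hg; rewrite Jm_mul_same // -(mono1 m); apply: mono_ext => x _ //.
Qed.

Lemma Jm_anti_same m r g h : (r < m)%N -> (forall b, g b * h (~~ b) = - (h b * g (~~ b))) ->
  Jm m r g * Jm m r h = - (Jm m r h * Jm m r g).
Proof.
move=> rm hg; rewrite !Jm_mul_same // mono_opp; apply: mono_ext => x _ //.
Qed.

Lemma Jm_anti_lt m r r' g h : (r' < r)%N -> (r < m)%N ->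
  Jm m r g * Jm m r' h = - (Jm m r' h * Jm m r g).
Proof.
move=> h1 h2; rewrite /Jm !mono_mul; try by move=> x; apply: flip_lt; lia.
rewrite mono_opp; apply: mono_ext => x _; first by rewrite flipC.
rewrite sgn_flip_lt // sgn_flip_le; last by lia.
rewrite bit_flip_ne ?bit_flip_ne //; try by rewrite ?ltn_eqF ?gtn_eqF.
ring. by rewrite gtn_eqF.
Qed.


Definition gk (k : bool) : bool -> algC := if k then (fun b => if b then 'i else -'i) else (fun _ => 1).
Definition site n (i : nat) : nat := if (i < n./2)%N then i else (i - n./2)%N.

Lemma site_lt n (i : 'I_n) : ~~ odd n -> (site n i < n./2)%N.
Proof.
move=> ev; rewrite /site; case: ifP => // /negbT; rewrite -leqNgt => hi.
have := odd_double_half n; rewrite (negbTE ev) add0n -addnn => e.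
have := ltn_ord i; lia.
Qed.

Lemma psiJ n (i : 'I_n) : ~~ odd n ->
  psi i = Jm n./2 (n./2 - (site n i).+1) (gk (n./2 <= i)%N).
Proof.
move=> ev; have := site_lt i ev; rewrite /psi /site; case: ifP => hi hs /=.
  rewrite (@jw_mono _ _ _ (gk false)) //; last by move=> a b; rewrite !mxE; case: (a == b).
  by rewrite /Jm leqNgt hi.
rewrite (@jw_mono _ _ _ (gk true)) //; last first.
  by move=> a b; rewrite !mxE; case: a => [[|[|//]] ?]; case: b => [[|[|//]] ?].
by rewrite /Jm leqNgt hi.
Qed.

Lemma psi_sq n (i : 'I_n) : ~~ odd n -> psi i * psi i = 1.
Proof.
move=> ev; rewrite psiJ //; apply: Jm_sq; first by have := site_lt i ev; lia.
case: (n./2 <= i)%N => [] [] /=; rewrite ?mulr1 //.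
  by rewrite mulrN -expr2 sqrCi opprK.
by rewrite mulNr -expr2 sqrCi opprK.
Qed.

Lemma ar1 h s : (s < h)%N -> (h - s.+1 < h)%N. Proof. lia. Qed.
Lemma ar2 h s t : (s < h)%N -> (t < h)%N -> (h - s.+1 = h - t.+1)%N -> s = t. Proof. lia. Qed.

Lemma gk_anti k k' : k != k' -> forall b, gk k b * gk k' (~~ b) = - (gk k' b * gk k (~~ b)).
Proof. by case: k; case: k' => //= _ [] /=; rewrite ?mulr1 ?mul1r ?opprK. Qed.

Lemma site_inj n (i j : 'I_n) : site n i = site n j -> (n./2 <= i)%N = (n./2 <= j)%N -> i = j.
Proof.
move=> e k; apply: val_inj => /=; move: e k; rewrite /site.
move: (n./2) (nat_of_ord i) (nat_of_ord j) => h a b.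
case: ltnP => ha; case: ltnP => hb //= e _; lia.
Qed.

Lemma psi_anti n (i j : 'I_n) : ~~ odd n -> i != j -> psi i * psi j = - (psi j * psi i).
Proof.
move=> ev nij; rewrite !psiJ //.
have si := site_lt i ev; have sj := site_lt j ev.
have ri := ar1 si; have rj := ar1 sj.
have [lt|gt|heq] := ltngtP (n./2 - (site n i).+1) (n./2 - (site n j).+1).
- pose proof (Jm_anti_lt (gk (n./2 <= j)%N) (gk (n./2 <= i)%N) lt rj) as HH.
  exact: (etrans (esym (opprK _)) (f_equal (fun x => - x) (esym HH))).
- pose proof (Jm_anti_lt (gk (n./2 <= i)%N) (gk (n./2 <= j)%N) gt ri) as HH. exact HH.
have es := ar2 si sj heq.
have ek : (n./2 <= i)%N != (n./2 <= j)%N.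
  apply/negP => /eqP k; move/eqP: nij; apply; exact: site_inj es k.
rewrite heq; exact: (Jm_anti_same rj (gk_anti ek)).
Qed.


Lemma sAr N (k : algC) (A B : 'M[algC]_N) : k *: (A * B) = A * (k *: B).
Proof. by rewrite -!mulmxE scalemxAr. Qed.
Lemma sAl N (k : algC) (A B : 'M[algC]_N) : k *: (A * B) = (k *: A) * B.
Proof. by rewrite -!mulmxE scalemxAl. Qed.

Definition Mw n (w : seq 'I_n) : 'M[algC]_(2 ^ n./2) := \prod_(i <- w) psi i.

Lemma Mw_cat n (s t : seq 'I_n) : Mw (s ++ t) = Mw s * Mw t.
Proof. by rewrite /Mw big_cat. Qed.

Lemma Mw_cons n (x : 'I_n) s : Mw (x :: s) = psi x * Mw s.
Proof. by rewrite /Mw big_cons. Qed.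

Lemma psi_comm n (j : 'I_n) w : ~~ odd n ->
  psi j * Mw w = ((-1) ^+ count (predC1 j) w) *: (Mw w * psi j).
Proof.
move=> ev; elim: w => [|x w IH].
  by rewrite /Mw big_nil /= expr0 scale1r mul1r mulr1.
rewrite Mw_cons /=; have [->|nxj] := eqVneq x j.
  by rewrite /= add0n {1}IH -sAr mulrA.
rewrite (_ : (~~ false + _)%N = (count (predC1 j) w).+1) // exprS -scalerA.
by rewrite mulrA psi_anti 1?eq_sym // mulNr -mulrA -(mulrA (psi x)) IH -sAr scaleN1r.
Qed.

Lemma tr_zero n (j : 'I_n) w : ~~ odd n -> odd (count (predC1 j) w) -> \tr (Mw w) = 0.
Proof.
move=> ev od.
have e : \tr (Mw w) = - \tr (Mw w).
  rewrite -{1}[Mw w]mul1r -(psi_sq j ev) -mulrA -!mulmxE mxtrace_mulC !mulmxE.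
  rewrite psi_comm // -sAl -mulrA psi_sq // mulr1 mxtraceZ.
  by rewrite -signr_odd od expr1 mulN1r.
have : \tr (Mw w) *+ 2 == 0 by rewrite mulr2n {2}e addrN.
by rewrite mulrn_eq0 /= => /eqP.
Qed.

Lemma Mw_reduce n (y : 'I_n) v t : ~~ odd n ->
  Mw (y :: v ++ y :: t) = ((-1) ^+ count (predC1 y) v) *: Mw (v ++ t).
Proof.
move=> ev; rewrite Mw_cons !Mw_cat Mw_cons mulrA psi_comm // -sAl.
by rewrite -mulrA (mulrA (psi y)) psi_sq // mul1r.
Qed.

Lemma tr_rot n (u t : seq 'I_n) : \tr (Mw (u ++ t)) = \tr (Mw (t ++ u)).
Proof. by rewrite !Mw_cat -!mulmxE mxtrace_mulC. Qed.

Lemma not_uniq_split (T : eqType) (w : seq T) : ~~ uniq w -> exists u y t, w = u ++ y :: t /\ y \in t.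
Proof.
elim: w => [//|z w IH] /=; rewrite negb_and negbK; case/orP => [hz | /IH [u [y [t [-> h]]]]].
  by exists [::], z, w.
by exists (z :: u), y, t.
Qed.

Lemma in_split (T : eqType) (y : T) s : y \in s -> exists v t, s = v ++ y :: t.
Proof. by case/splitPr => v t; exists v, t. Qed.

Lemma uniq_even_nil n (w : seq 'I_n) : ~~ odd n -> uniq w ->
  (forall j, ~~ odd (count (predC1 j) w)) -> w = [::].
Proof.
case: w => [//|y w'] ev u hc; exfalso.
have c1 : count (predC1 y) (y :: w') = size w'.
  rewrite /= eqxx add0n -(count_predT w'); apply: eq_in_count => z hz /=.
  apply/eqP => ez; move: u; rewrite /= -ez hz //.
have hs : (size (y :: w') <= n)%N.
  by move/card_uniqP: u => <-; rewrite -[X in (_ <= X)%N](card_ord n) max_card.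
have hodd : odd (size (y :: w')) by have := hc y; rewrite c1 /= => ->.
have hlt : (size (y :: w') < n)%N.
  rewrite ltn_neqAle hs andbT; apply: contraTneq hodd => ->; exact: ev.
have [j hj] : exists j, j \notin y :: w'.
  apply/existsP; apply: contraTT hlt => /existsPn hall; rewrite -leqNgt.
  rewrite -[X in (X <= _)%N](card_ord n) -(card_uniqP u).
  by apply/subset_leq_card/subsetP => z _; have := hall z; rewrite negbK.
have cj : count (predC1 j) (y :: w') = size (y :: w').
  rewrite -count_predT; apply: eq_in_count => z hz /=.
  by apply/eqP => ezj; move: hj; rewrite -ezj hz.
by have := hc j; rewrite cj hodd.
Qed.

Lemma count_map_inj n (f : 'I_n -> 'I_n) : injective f ->
  forall j s, count (predC1 (f j)) (map f s) = count (predC1 j) s.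
Proof.
move=> inj j s; rewrite count_map; apply: eq_count => z /=.
by rewrite (inj_eq inj).
Qed.

Lemma tr_inv n (f : 'I_n -> 'I_n) : injective f -> ~~ odd n ->
  forall w, \tr (Mw (map f w)) = \tr (Mw w).
Proof.
move=> inj ev w; move: {2}(size w) (leqnn (size w)) => N.
elim: N w => [|N IH] w hN.
  by case: w hN.
case: (boolP [exists j, odd (count (predC1 j) w)]) => [/existsP [j hj] | /existsPn hno].
  rewrite (tr_zero ev hj) (@tr_zero _ (f j)) //.
  by rewrite count_map_inj.
case: (boolP (uniq w)) => hu; first by rewrite (uniq_even_nil ev hu hno).
case/not_uniq_split: hu => u [y [t [ew hy]]].
have [v [t' e]] : exists v t', t ++ u = v ++ y :: t'.
  by apply: in_split; rewrite mem_cat hy.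
have h1 : \tr (Mw w) = (-1) ^+ count (predC1 y) v * \tr (Mw (v ++ t')).
  by rewrite ew tr_rot cat_cons e Mw_reduce // mxtraceZ.
have h2 : \tr (Mw (map f w)) = (-1) ^+ count (predC1 y) v * \tr (Mw (map f (v ++ t'))).
  rewrite ew map_cat tr_rot /= -map_cat e map_cat [map f (v ++ _)]map_cat /= Mw_reduce // mxtraceZ.
  by rewrite count_map_inj // map_cat.
rewrite h1 h2 IH //.
have := congr1 size e; move: hN; rewrite ew !size_cat /=; lia.
Qed.


Lemma sign_sq k : ((-1) ^+ k : algC) * (-1) ^+ k = 1.
Proof. by rewrite -exprD -signr_odd oddD addbb expr0. Qed.

Lemma Mw_perm n (s t : seq 'I_n) : ~~ odd n -> perm_eq s t ->
  exists e : algC, e * e = 1 /\ Mw t = e *: Mw s.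
Proof.
move=> ev; elim: s t => [|x s IH] t hp.
  have := perm_size hp; case: t hp => // _ _; exists 1; by rewrite mulr1 scale1r.
have : x \in t by rewrite -(perm_mem hp) mem_head.
case/in_split => t1 [t2 et]; subst t.
have hp' : perm_eq s (t1 ++ t2).
  rewrite -(perm_cons x); apply: (perm_trans hp).
  by rewrite -cat1s perm_catCA.
have [e [he He]] := IH _ hp'.
set c : algC := (-1) ^+ count (predC1 x) t1.
exists (c * e); split.
  by rewrite mulrACA sign_sq mul1r he.
have hc : Mw t1 * psi x = c *: (psi x * Mw t1).
  by rewrite psi_comm // scalerA sign_sq scale1r.
rewrite Mw_cat [Mw (x :: t2)]Mw_cons mulrA hc -sAl -mulrA -Mw_cat.
by rewrite He -sAr scalerA Mw_cons.
Qed.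

Definition eps n (s : {perm 'I_n}) (X : {set 'I_n}) : algC :=
  if Mw (enum (s @: X)) == Mw (map s (enum X)) then 1 else -1.

Lemma eps_spec n (s : {perm 'I_n}) (X : {set 'I_n}) : ~~ odd n ->
  Mw (enum (s @: X)) = eps s X *: Mw (map s (enum X)).
Proof.
move=> ev.
have hp : perm_eq (map s (enum X)) (enum (s @: X)).
  apply: uniq_perm; first by rewrite map_inj_uniq ?enum_uniq //; exact: perm_inj.
    exact: enum_uniq.
  move=> z; rewrite mem_enum; apply/mapP/imsetP => [[y hy ->]|[y hy ->]]; exists y => //.
    by rewrite -mem_enum.
  by rewrite mem_enum.
have [e [he He]] := Mw_perm ev hp.
rewrite /eps; case: ifP => [/eqP h|/negbT h]; first by rewrite h scale1r.
have : e ^+ 2 == 1 by rewrite expr2 he.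
rewrite sqrf_eq1 => /orP [/eqP e1|/eqP e1].
  by move: h; rewrite He e1 scale1r eqxx.
by rewrite He e1.
Qed.

Lemma eps_sq n (s : {perm 'I_n}) (X : {set 'I_n}) : eps s X * eps s X = 1.
Proof. by rewrite /eps; case: ifP; rewrite ?mulr1 ?mulrNN ?mulr1. Qed.

Lemma Psi_eq n q (R : {set 'I_n}) : Psi q R = ('i ^+ q./2) *: Mw (enum R).
Proof. by rewrite /Psi -mulmxE mul_mx_scalar mulmxE. Qed.

Lemma prodZ N (I : Type) (r : seq I) (F : I -> algC) (G : I -> 'M[algC]_N) :
  \prod_(i <- r) (F i *: G i) = (\prod_(i <- r) F i) *: \prod_(i <- r) G i.
Proof.
elim: r => [|x r IH]; first by rewrite !big_nil scale1r.
by rewrite !big_cons IH -sAr -sAl scalerA [F x * _]mulrC.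
Qed.

Lemma prodMw n k (G : 'I_k -> seq 'I_n) :
  \prod_(j < k) Mw (G j) = Mw (flatten [seq G j | j <- index_enum 'I_k]).
Proof. by rewrite /Mw big_flatten big_map. Qed.

Lemma ntrZ m (x : algC) (A : 'M[algC]_(2 ^ m)) : ntr (x *: A) = x * ntr A.
Proof. by rewrite /ntr mxtraceZ mulrA. Qed.

Lemma prod_pairs k (P : {set {set 'I_k}}) (F : 'I_k -> algC) : pair_partition P ->
  (forall B x y, B \in P -> x \in B -> y \in B -> F x = F y) ->
  (forall x, F x * F x = 1) -> \prod_(j < k) F j = 1.
Proof.
case/andP => /and3P [/eqP cov triv _] /forallP h2 hF hsq.
have -> : \prod_(j < k) F j = \prod_(j in cover P) F j.
  by rewrite cov; apply: eq_bigl => j; rewrite in_setT.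
rewrite big_trivIset //; apply: big1 => B hB.
have := h2 B; rewrite hB /= => /cards2P [x [y [nxy eB]]].
have xB : x \in B by rewrite eB !inE eqxx.
rewrite (eq_bigr (fun _ => F x)); last by move=> z hz; apply: (hF B) => //.
by rewrite prodr_const eB cards2 nxy expr2 hsq.
Qed.

Lemma trPsi_inv n q k (P : {set {set 'I_k}}) (a : {ffun 'I_k -> {set 'I_n}}) (s : {perm 'I_n}) :
  ~~ odd n -> pair_partition P -> ker_ge a P ->
  trPsi q [ffun j => s @: a j] = trPsi q a.
Proof.
move=> ev pp ka; rewrite /trPsi.
have E1 : \prod_(j < k) Psi q ([ffun j => s @: a j] j) =
    (\prod_(j < k) ('i ^+ q./2 * eps s (a j))) *:
    Mw (map s (flatten [seq enum (a j) | j <- index_enum 'I_k])).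
  under eq_bigr => j _ do rewrite ffunE Psi_eq eps_spec // scalerA.
  rewrite prodZ prodMw map_flatten -map_comp.
  by congr (_ *: Mw (flatten _)).
have E2 : \prod_(j < k) Psi q (a j) =
    (\prod_(j < k) ('i ^+ q./2)) *: Mw (flatten [seq enum (a j) | j <- index_enum 'I_k]).
  under eq_bigr => j _ do rewrite Psi_eq.
  by rewrite prodZ prodMw.
rewrite E1 E2 !ntrZ big_split /=.
rewrite (@prod_pairs k P (fun j => eps s (a j))) // ?mulr1.
- by congr (_ * _); rewrite /ntr tr_inv //; exact: perm_inj.
- move=> B x y hB hx hy; move/forallP: ka => /(_ B); rewrite hB /=.
  move/forallP => /(_ x); rewrite hx /= => /forallP /(_ y); rewrite hy /= => /eqP ->.
  by [].
- by move=> x; rewrite eps_sq.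
Qed.


Lemma exists_perm n (R R' : {set 'I_n}) : #|R| = #|R'| -> exists s : {perm 'I_n}, s @: R = R'.
Proof.
move=> hc.
have hs : forall A : {set 'I_n}, size (enum A ++ enum (~: A)) = n.
  by move=> A; rewrite size_cat -!cardE cardsC card_ord.
have hu : forall A : {set 'I_n}, uniq (enum A ++ enum (~: A)).
  move=> A; rewrite cat_uniq !enum_uniq /= andbT; apply/hasPn => x.
  by rewrite !mem_enum inE => /negbTE ->.
have hm : forall (A : {set 'I_n}) x, x \in enum A ++ enum (~: A).
  by move=> A x; rewrite mem_cat !mem_enum inE orbN.
set r := enum R ++ enum (~: R); set r' := enum R' ++ enum (~: R').
pose f x := nth x r' (index x r).
have fi : injective f.
  move=> x y; rewrite /f => e.
  have sr : size r' = size r by rewrite /r /r' !hs.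
  have ix : (index x r < size r')%N by rewrite sr index_mem hm.
  have iy : (index y r < size r')%N by rewrite sr index_mem hm.
  move: e; rewrite (set_nth_default x _ iy) => /eqP; rewrite nth_uniq ?hu // => /eqP e.
  by rewrite -(nth_index x (hm R x)) -/r e nth_index // hm.
exists (perm fi); apply/eqP; rewrite eqEcard card_imset ?hc ?leqnn ?andbT; last exact: perm_inj.
apply/subsetP => y /imsetP [x xR ->]; rewrite permE /f /r index_cat mem_enum xR.
have hi : (index x (enum R) < size (enum R'))%N by rewrite -cardE -hc cardE index_mem mem_enum.
by rewrite /r' nth_cat hi -mem_enum mem_nth.
Qed.

Lemma imset_perm_eq n (s : {perm 'I_n}) (X Y : {set 'I_n}) : (s @: X == s @: Y) = (X == Y).
Proof.
apply/eqP/eqP => [e|-> //].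
have K : forall Z : {set 'I_n}, (s^-1)%g @: (s @: Z) = Z.
  move=> Z; rewrite -imset_comp -[RHS]imset_id; apply: eq_imset => z /=.
  by rewrite permK.
by rewrite -(K X) e K.
Qed.

Definition cond n q k (P : {set {set 'I_k}}) (V : {set 'I_k}) (R : {set 'I_n})
  (a : {ffun 'I_k -> {set 'I_n}}) :=
  [&& [forall j, a j \in Iset n q], ker_ge a P & [forall x in V, a x == R]].

Lemma F_inv n q k (P : {set {set 'I_k}}) V (R R' : {set 'I_n}) :
  ~~ odd n -> pair_partition P -> R \in Iset n q -> R' \in Iset n q ->
  \sum_(a | cond q P V R a) trPsi q a = \sum_(a | cond q P V R' a) trPsi q a.
Proof.
move=> ev pp hR hR'.
have [s es] : exists s : {perm 'I_n}, s @: R = R'.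
  by apply: exists_perm; move: hR hR'; rewrite !inE => /eqP -> /eqP ->.
pose h (a : {ffun 'I_k -> {set 'I_n}}) := [ffun j => s @: a j].
pose g (a : {ffun 'I_k -> {set 'I_n}}) := [ffun j => (s^-1)%g @: a j].
have K : forall Z : {set 'I_n}, (s^-1)%g @: (s @: Z) = Z.
  move=> Z; rewrite -imset_comp -[RHS]imset_id; apply: eq_imset => z /=.
  by rewrite permK.
have K' : forall Z : {set 'I_n}, s @: ((s^-1)%g @: Z) = Z.
  move=> Z; rewrite -imset_comp -[RHS]imset_id; apply: eq_imset => z /=.
  by rewrite permKV.
rewrite [RHS](reindex h); last first.
  by apply: onW_bij; exists g => a; apply/ffunP => j; rewrite !ffunE ?K ?K'.
apply: eq_big => [a|a ca].
  rewrite /cond; congr [&& _, _ & _].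
  - by apply: eq_forallb => j; rewrite !inE ffunE card_imset //; exact: perm_inj.
  - apply: eq_forallb => B; congr (_ ==> _); apply: eq_forallb => x; congr (_ ==> _).
    by apply: eq_forallb => y; rewrite !ffunE imset_perm_eq.
  - by apply: eq_forallb => x; rewrite ffunE -es imset_perm_eq.
case/and3P: ca => _ ka _; rewrite /h; exact: (esym (trPsi_inv q s ev pp ka)).
Qed.

Unset Implicit Arguments.

Theorem lemma3p4 (n q k : nat) (P : {set {set 'I_k}}) (V : {set 'I_k})
    (R : {set 'I_n}) :
  ~~ odd n -> (1 <= q <= n./2)%N ->
  pair_partition P -> V \in P -> R \in Iset n q ->
  ((#|Iset n q|%:R : algC) ^+ (k - 2)./2)^-1 *
  \sum_(a : {ffun 'I_k -> {set 'I_n}} |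
          [&& [forall j, a j \in Iset n q], ker_ge a P & [forall x in V, a x == R]])
     trPsi q a
  = S n q P.
Proof.
move=> ev _ pp hV hR.
have V2 : #|V| = 2%N by case/andP: pp => _ /forallP /(_ V); rewrite hV => /eqP.
have [v0 v0V] : exists v0, v0 \in V.
  by apply/set0Pn; rewrite -card_gt0 V2.
have k2 : (2 <= k)%N by rewrite -V2 -[X in (_ <= X)%N](card_ord k) max_card.
pose F := fun R' : {set 'I_n} => \sum_(a | cond q P V R' a) trPsi q a.
have hsum : \sum_(a : {ffun 'I_k -> {set 'I_n}} |
          [forall j, a j \in Iset n q] && ker_ge a P) trPsi q a =
          \sum_(R' in Iset n q) F R'.
  rewrite (partition_big (fun a : {ffun 'I_k -> {set 'I_n}} => a v0) (mem (Iset n q))).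
    apply: eq_bigr => R' hR'; apply: eq_bigl => a; rewrite /cond.
    case/boolP: ([forall j, a j \in Iset n q] && ker_ge a P) => [/andP [ha ka]|hn]; last first.
      by rewrite andbA (negbTE hn).
    rewrite ha ka /=; apply/eqP/forallP => [e x|h]; last first.
      by have := h v0; rewrite v0V /= => /eqP.
    apply/implyP => xV; rewrite -e.
    move/forallP: ka => /(_ V); rewrite hV /= => /forallP /(_ x); rewrite xV /=.
    by move/forallP => /(_ v0); rewrite v0V.
  by move=> a /andP [/forallP /(_ v0)].
have hconst : \sum_(R' in Iset n q) F R' = #|Iset n q|%:R * F R.
  rewrite (eq_bigr (fun _ => F R)); first by rewrite sumr_const mulr_natl.
  by move=> R' hR'; rewrite /F (F_inv V ev pp hR' hR).
rewrite /S hsum hconst -/(F R).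
have N0 : (#|Iset n q|%:R : algC) != 0.
  by rewrite pnatr_eq0 -lt0n card_gt0; apply/set0Pn; exists R.
have -> : k./2 = ((k - 2)./2).+1 by lia.
rewrite exprS invfM; move: N0; set N := (#|Iset n q|%:R : algC) => N0.
by rewrite [N^-1 * _]mulrC -mulrA (mulrA N^-1) mulVf // mul1r.
Qed.
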